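(* Let $P$ be a poset and $\mathcal{U}$ a join-specification for $P$. Then there is a largest join-specification $\mathcal{U}'\subseteq\mathcal{U}$ that is frame-generating.
   Context: A join-specification for $P$ is a set $\mathcal{U}\subseteq\wp(P)$ such that $\bigvee S$ exists in $P$ for every $S\in\mathcal{U}$ and $\{p\}\in\mathcal{U}$ for every $p\in P$. A $\mathcal{U}$-ideal is a down-closed $C\subseteq P$ with $\bigvee S\in C$ whenever $S\in\mathcal{U}$, $S\subseteq C$; $\mathcal{I}_{\mathcal{U}}$ is the complete lattice of $\mathcal{U}$-ideals ordered by inclusion; $\mathcal{U}$ is frame-generating if $\mathcal{I}_{\mathcal{U}}$ is a frame. *)

(* Defs.v *)
From mathcomp Require Import all_boot all_order.
Set Implicit Arguments. Unset Strict Implicit. Unset Printing Implicit Defensive.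
Import Order.Theory.
Local Open Scope order_scope.

Definition is_join {d : Order.disp_t} {T : porderType d} (S : T -> Prop) (x : T) : Prop :=
  (forall s, S s -> s <= x) /\ (forall y, (forall s, S s -> s <= y) -> x <= y).

Definition join_spec {d : Order.disp_t} {T : porderType d} (U : (T -> Prop) -> Prop) : Prop :=
  (forall S, U S -> exists x, is_join S x) /\
  (forall p : T, U (fun q => q = p)).

Definition U_ideal {d : Order.disp_t} {T : porderType d} (U : (T -> Prop) -> Prop)
    (C : T -> Prop) : Prop :=
  (forall x y : T, x <= y -> C y -> C x) /\
  (forall S, U S -> (forall s, S s -> C s) -> forall x, is_join S x -> C x).

Definition subset {T : Type} (A B : T -> Prop) : Prop := forall x, A x -> B x.

Definition is_lub_in {T : Type} (L : (T -> Prop) -> Prop) (F : (T -> Prop) -> Prop)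
    (j : T -> Prop) : Prop :=
  L j /\ (forall A, F A -> subset A j) /\
  (forall B, L B -> (forall A, F A -> subset A B) -> subset j B).

Definition is_glb_in {T : Type} (L : (T -> Prop) -> Prop) (F : (T -> Prop) -> Prop)
    (m : T -> Prop) : Prop :=
  L m /\ (forall A, F A -> subset m A) /\
  (forall B, L B -> (forall A, F A -> subset B A) -> subset B m).

Definition complete_lattice_in {T : Type} (L : (T -> Prop) -> Prop) : Prop :=
  forall F, (forall A, F A -> L A) -> exists j, is_lub_in L F j.

(* binary meet a /\ b as a family *)
Definition pair_fam {T : Type} (a b : T -> Prop) : (T -> Prop) -> Prop :=
  fun A => A = a \/ A = b.

(* L (ordered by inclusion) is a frame: a complete lattice in which
   a /\ (\/ F) = \/ { a /\ s | s in F } for every a in L and every F included in L. *)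
Definition is_frame {T : Type} (L : (T -> Prop) -> Prop) : Prop :=
  complete_lattice_in L /\
  forall (a : T -> Prop) (F : (T -> Prop) -> Prop), L a -> (forall A, F A -> L A) ->
  forall j m k,
    is_lub_in L F j ->
    is_glb_in L (pair_fam a j) m ->
    is_lub_in L (fun c => exists s, F s /\ is_glb_in L (pair_fam a s) c) k ->
    m = k.

Definition frame_generating {d : Order.disp_t} {T : porderType d}
    (U : (T -> Prop) -> Prop) : Prop :=
  is_frame (U_ideal U).

(* Main.v *)
Require Import Defs.
From mathcomp Require Import all_boot all_order.
From Stdlib Require Import FunctionalExtensionality PropExtensionality.
Set Implicit Arguments. Unset Strict Implicit. Unset Printing Implicit Defensive.
Import Order.Theory.
Local Open Scope order_scope.

Section Aux.
Variables (d : Order.disp_t) (T : porderType d).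

Definition dc (A : T -> Prop) := forall x y : T, x <= y -> A y -> A x.

Definition good (V : (T -> Prop) -> Prop) (S : T -> Prop) :=
  forall A C, dc A -> U_ideal V C ->
  (forall s, S s -> forall w, w <= s -> A w -> C w) ->
  forall x, is_join S x -> forall w, w <= x -> A w -> C w.

Lemma good_mono (V W : (T -> Prop) -> Prop) S : (forall S, V S -> W S) -> good V S -> good W S.
Proof.
move=> VW g A C dA [Cd Cj] HS x jx w wx Aw.
apply: (g A C dA _ HS x jx w wx Aw); split => //.
move=> S' VS'; exact: Cj S' (VW _ VS').
Qed.

Lemma lub_ex (V F : (T -> Prop) -> Prop) : exists j, is_lub_in (U_ideal V) F j.
Proof.
exists (fun x => forall B, U_ideal V B -> (forall A, F A -> Defs.subset A B) -> B x).
split; [split|split].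
- move=> x y xy jy B HB FB; exact: (proj1 HB) x y xy (jy B HB FB).
- move=> S VS Sj x jx B HB FB; apply: (proj2 HB S VS _ x jx).
  move=> s Ss; exact: Sj s Ss B HB FB.
- move=> A FA x Ax B HB FB; exact: FB A FA x Ax.
- move=> B HB FB x jx; exact: jx B HB FB.
Qed.

Lemma glb_inter (V : (T -> Prop) -> Prop) (a b : T -> Prop) : U_ideal V a -> U_ideal V b ->
  is_glb_in (U_ideal V) (pair_fam a b) (fun x => a x /\ b x).
Proof.
move=> [ad aj] [bd bj]; split; [split|split].
- move=> x y xy [ay byy]; split; [exact: ad x y xy ay | exact: bd x y xy byy].
- move=> S VS Sab x jx; split.
  + apply: (aj S VS _ x jx) => s Ss; exact: proj1 (Sab s Ss).
  + apply: (bj S VS _ x jx) => s Ss; exact: proj2 (Sab s Ss).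
- by move=> A [->|->] x [].
- move=> B _ HB x Bx; split; [exact: HB a (or_introl erefl) x Bx|
                             exact: HB b (or_intror erefl) x Bx].
Qed.

Definition pr (y : T) : T -> Prop := fun z => z <= y.

Lemma principal_ideal (V : (T -> Prop) -> Prop) (y : T) : U_ideal V (pr y).
Proof. rewrite /pr.
split.
- move=> x z xz zy; exact: le_trans xz zy.
- move=> S _ Sy x [_ lx]; exact: lx y Sy.
Qed.

Lemma fg_sub (V : (T -> Prop) -> Prop) : frame_generating V -> forall S, V S -> good V S.
Proof.
move=> [cl fl] S VS A C dA HC HS x jx y yx Ay.
pose F : (T -> Prop) -> Prop := fun I => exists s, S s /\ I = (pr s).
have FI : forall I, F I -> U_ideal V I by move=> I [s [_ ->]]; exact: principal_ideal.
have [j Hj] := lub_ex V F.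
have [m Hm] : exists m, is_glb_in (U_ideal V) (pair_fam (pr y) j) m.
  by eexists; apply: glb_inter; [exact: principal_ideal | exact: proj1 Hj].
have [k Hk] := lub_ex V (fun c => exists s, F s /\ is_glb_in (U_ideal V) (pair_fam (pr y) s) c).
have e := fl _ F (principal_ideal V y) FI j m k Hj Hm Hk.
have jx' : j x.
  apply: (proj2 (proj1 Hj) S VS _ x jx) => s Ss.
  apply: (proj1 (proj2 Hj) (pr s) _ s (lexx s)).
  by exists s.
have my : m y.
  have Hg := glb_inter (principal_ideal V y) (proj1 Hj).
  apply: (proj2 (proj2 Hm) _ (proj1 Hg) (proj1 (proj2 Hg)) y).
  split; [exact: lexx | exact: (proj1 (proj1 Hj)) y x yx jx'].
rewrite e in my.
apply: (proj2 (proj2 Hk) C HC _ y my).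
move=> c [I [[s [Ss ->]] Hc]] z cz.
have zy : z <= y := proj1 (proj2 Hc) _ (or_introl erefl) z cz.
have zs : z <= s := proj1 (proj2 Hc) _ (or_intror erefl) z cz.
exact: HS s Ss z zs (dA z y zy Ay).
Qed.

Lemma sub_fg (V : (T -> Prop) -> Prop) : (forall S, V S -> good V S) -> frame_generating V.
Proof.
move=> G; split; first by move=> F _; exact: lub_ex.
move=> a F Ha FI j m k Hj Hm Hk.
have ma : Defs.subset m a := proj1 (proj2 Hm) a (or_introl erefl).
have mj : Defs.subset m j := proj1 (proj2 Hm) j (or_intror erefl).
apply: functional_extensionality => x; apply: propositional_extensionality; split.
- move=> mx.
  pose H := fun u => forall w, w <= u -> a w -> k w.
  have HH : U_ideal V H.
    split.
    + move=> u v uv Hv w wu aw; exact: Hv w (le_trans wu uv) aw.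
    + move=> S VS SH u ju w wu aw.
      exact: G S VS a k (proj1 Ha) (proj1 Hk) SH u ju w wu aw.
  have jH : Defs.subset j H.
    apply: (proj2 (proj2 Hj) H HH) => s Fs z sz w wz aw.
    have sw : s w := proj1 (FI s Fs) w z wz sz.
    have Hg := glb_inter Ha (FI s Fs).
    apply: (proj1 (proj2 Hk) _ _ w (conj aw sw)).
    exists s; split; [exact: Fs | exact: Hg].
  exact (jH x (mj x mx) x (lexx x) (ma x mx)).
- move=> kx.
  apply: (proj2 (proj2 Hk) m (proj1 Hm) _ x kx).
  move=> c [s [Fs Hc]].
  apply: (proj2 (proj2 Hm) c (proj1 Hc)).
  move=> A [->|->]; first exact (proj1 (proj2 Hc) a (or_introl erefl)).
  move=> z cz; apply: (proj1 (proj2 Hj) s Fs z).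
  exact (proj1 (proj2 Hc) s (or_intror erefl) z cz).
Qed.

End Aux.

Theorem proposition5p2 (d : Order.disp_t) (T : porderType d)
    (U : (T -> Prop) -> Prop) :
  join_spec U ->
  exists U' : (T -> Prop) -> Prop,
    [/\ join_spec U',
        (forall S, U' S -> U S),
        frame_generating U' &
        forall V : (T -> Prop) -> Prop,
          join_spec V -> (forall S, V S -> U S) -> frame_generating V ->
          forall S, V S -> U' S].
Proof.
move=> [Uj Us].
pose U' := fun S => exists V : (T -> Prop) -> Prop,
  [/\ join_spec V, (forall S, V S -> U S), frame_generating V & V S].
have U'U : forall S, U' S -> U S by move=> S [V [_ VU _ VS]]; exact: VU.
pose V0 := fun S : T -> Prop => exists p, S = (fun q => q = p).
have V0j : join_spec V0.
  split; last by move=> p; exists p.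
  move=> S [p ->]; exists p; split; first by move=> s ->.
  by move=> y Hy; apply: Hy.
have V0fg : frame_generating V0.
  apply: sub_fg => S [p ->] A C dA HC HS x [_ lx] w wx Aw.
  have xp : x <= p by apply: lx => s ->.
  exact (HS p erefl w (le_trans wx xp) Aw).
exists U'; split.
- split; first by move=> S /U'U; exact: Uj.
  move=> p; exists V0; split => //; last by exists p.
  by move=> S [q ->].
- exact: U'U.
- apply: sub_fg => S [V [Vj VU Vfg VS]].
  apply: good_mono (fg_sub Vfg VS).
  by move=> S' VS'; exists V.
- move=> V Vj VU Vfg S VS; by exists V.
Qed.
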